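(* Let $\mathbf{a}=(a_1,a_2,a_3,a_4)\in\mathbb C^4$ and let $$S_{\mathbf a}=\{(x_1,x_2,x_3)\in\mathbb C^3 : x_1^2+x_2^2+x_3^2+x_1x_2x_3=a_1x_1+a_2x_2+a_3x_3+a_4\},$$ equipped with the holomorphic symplectic form $$\Omega=\frac{dx_1\wedge dx_2}{2x_3+x_1x_2-a_3}=\frac{dx_2\wedge dx_3}{2x_1+x_2x_3-a_1}=\frac{dx_3\wedge dx_1}{2x_2+x_1x_3-a_2}.$$ Let $\mathcal F_1=\ker(dx_1)$ and $\mathcal F_2=\ker(dx_2)$ restricted to $S_{\mathbf a}$, considered on the open set of smooth points where they are transversal. Then the Hess connection of the bi-Lagrangian manifold $(S_{\mathbf a},\Omega,\mathcal F_1,\mathcal F_2)$ is flat if and only if $\mathbf a=(0,0,0,4)$.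
   Context: A bi-Lagrangian structure on a (holomorphic) symplectic manifold $(M,\omega)$ is a pair of transversal Lagrangian foliations; on a surface, any pair of transversal foliations by curves is bi-Lagrangian. The Hess connection of a bi-Lagrangian manifold $(M,\omega,\mathcal F_1,\mathcal F_2)$ is the unique torsion-free affine connection $\nabla$ on $TM$ such that $X\cdot\omega(Y,Z)=\omega(\nabla_XY,Z)+\omega(Y,\nabla_XZ)$ for all vector fields $X,Y,Z$, and $\nabla_XY$ is tangent to $\mathcal F_j$ whenever $Y$ is tangent to $\mathcal F_j$ ($j=1,2$). It is flat if its curvature $R(X,Y)Z=\nabla_X\nabla_YZ-\nabla_Y\nabla_XZ-\nabla_{[X,Y]}Z$ vanishes identically. *)

(* Defs.v *)
From Stdlib Require Import Reals.
From Coquelicot Require Import Coquelicot.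
Open Scope C_scope.

(* Coordinates (x1, x2) on the surface S_a (chart where dx1 /\ dx2 <> 0 on S_a). *)
Inductive idx := I1 | I2.

Definition Fa (a1 a2 a3 a4 x1 x2 x3 : C) : C :=
  x1 * x1 + x2 * x2 + x3 * x3 + x1 * x2 * x3
  - (a1 * x1 + a2 * x2 + a3 * x3 + a4).

Definition pd (i : idx) (f : C * C -> C) (p : C * C) (l : C) : Prop :=
  match i with
  | I1 => is_derive (fun z : C => f (z, snd p)) (fst p) l
  | I2 => is_derive (fun z : C => f (fst p, z)) (snd p) l
  end.

(* f is holomorphic on U (separately holomorphic = holomorphic, Hartogs). *)
Definition holo_on (U : C * C -> Prop) (f : C * C -> C) : Prop :=
  forall p, U p -> forall i, exists l, pd i f p l.

(* (U, h) is a local parametrization of the open part of S_a where F1, F2 are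
   transversal: (x1,x2) in U |-> (x1, x2, h(x1,x2)) in S_a, with
   2 x3 + x1 x2 - a3 = dFa/dx3 <> 0 (equivalently dx1/\dx2 |_{S_a} <> 0). *)
Definition chart (a1 a2 a3 a4 : C) (U : C * C -> Prop) (h : C * C -> C) : Prop :=
  open U /\ holo_on U h /\
  forall p, U p ->
    Fa a1 a2 a3 a4 (fst p) (snd p) (h p) = 0 /\
    2 * h p + fst p * snd p - a3 <> 0.

(* Components of Omega = dx1 /\ dx2 / (2 x3 + x1 x2 - a3) in the chart:
   om i j p = Omega(d_i, d_j) at p. *)
Definition om (a3 : C) (h : C * C -> C) (i j : idx) (p : C * C) : C :=
  match i, j with
  | I1, I2 => / (2 * h p + fst p * snd p - a3)
  | I2, I1 => - / (2 * h p + fst p * snd p - a3)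
  | _, _ => 0
  end.

Definition sum2 (f : idx -> C) : C := f I1 + f I2.

(* An affine connection on U given by its Christoffel symbols:
   nabla_{d_i} d_j = sum_k G k i j * d_k. *)
Definition christoffel := idx -> idx -> idx -> C * C -> C.

(* G is the Hess connection of (S_a, Omega, F1 = ker dx1, F2 = ker dx2) on the
   chart: holomorphic, torsion-free, Omega-parallel, and preserving both
   foliations (F1 is spanned by d_2, F2 by d_1). *)
Definition is_hess (a3 : C) (U : C * C -> Prop) (h : C * C -> C)
    (G : christoffel) : Prop :=
  (forall k i j, holo_on U (G k i j)) /\
  forall p, U p ->
    (forall k i j, G k i j p = G k j i p) /\
    (forall i j l, pd i (om a3 h j l) p
        (sum2 (fun m => G m i j p * om a3 h m l p)
         + sum2 (fun m => G m i l p * om a3 h j m p))) /\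
    (forall i, G I1 i I2 p = 0) /\
    (forall i, G I2 i I1 p = 0).

(* Flatness: R(d_i, d_j) d_k = 0 for all i j k, at every point of U, where
   R^l_{k i j} = d_i G^l_{jk} - d_j G^l_{ik}
                 + sum_m (G^m_{jk} G^l_{im} - G^m_{ik} G^l_{jm}). *)
Definition flat (U : C * C -> Prop) (G : christoffel) : Prop :=
  forall p, U p ->
    exists dG : idx -> idx -> idx -> idx -> C,
      (forall d k i j, pd d (G k i j) p (dG d k i j)) /\
      (forall l k i j,
          dG i l j k - dG j l i k
          + sum2 (fun m => G m j k p * G l i m p - G m i k p * G l j m p) = 0).

(* Main.v *)
Require Import Defs.
From Stdlib Require Import Reals.
From Coquelicot Require Import Coquelicot.
Open Scope C_scope.
From Stdlib Require Import Lra Classical ClassicalEpsilon.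

Lemma tr (f : C -> C) x l : @is_derive C_AbsRing (AbsRing_NormedModule C_AbsRing) f x l -> @is_derive C_AbsRing C_NormedModule f x l.
Proof. intros [_ H]. split. apply is_linear_scal_l. intros x' Hx'. specialize (H x' Hx'). intros eps. specialize (H eps).
eapply filter_imp; [|exact H]. intros y Hy. exact Hy. Qed.
Lemma tr2 (f : C -> C) x l : @is_derive C_AbsRing C_NormedModule f x l -> @is_derive C_AbsRing (AbsRing_NormedModule C_AbsRing) f x l.
Proof. intros [_ H]. split. apply is_linear_scal_l. intros x' Hx'. specialize (H x' Hx'). intros eps. specialize (H eps).
eapply filter_imp; [|exact H]. intros y Hy. exact Hy. Qed.

Lemma dC_eq (f : C -> C) (x l l' : C) : is_derive f x l -> l = l' -> is_derive f x l'.
Proof. intros H ->; exact H. Qed.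
Lemma dC_const (a x : C) : is_derive (fun _ : C => a) x (RtoC 0).
Proof. exact (@is_derive_const C_AbsRing C_NormedModule a x). Qed.
Lemma dC_id (x : C) : is_derive (fun z : C => z) x (RtoC 1).
Proof. apply tr. exact (@is_derive_id C_AbsRing x). Qed.
Lemma dC_plus (f g : C -> C) (x df dg : C) : is_derive f x df -> is_derive g x dg ->
  is_derive (fun z => f z + g z) x (df + dg).
Proof. intros; exact (@is_derive_plus C_AbsRing C_NormedModule f g x df dg H H0). Qed.
Lemma dC_opp (f : C -> C) (x df : C) : is_derive f x df ->
  is_derive (fun z => - f z) x (- df).
Proof. intros; exact (@is_derive_opp C_AbsRing C_NormedModule f x df H). Qed.
Lemma dC_minus (f g : C -> C) (x df dg : C) : is_derive f x df -> is_derive g x dg ->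
  is_derive (fun z => f z - g z) x (df - dg).
Proof. intros; exact (@is_derive_minus C_AbsRing C_NormedModule f g x df dg H H0). Qed.
Lemma dC_mult (f g : C -> C) (x df dg : C) : is_derive f x df -> is_derive g x dg ->
  is_derive (fun z => f z * g z) x (df * g x + f x * dg).
Proof. intros; apply tr. exact (@is_derive_mult C_AbsRing f g x df dg (tr2 _ _ _ H) (tr2 _ _ _ H0) Cmult_comm). Qed.
Lemma dC_comp (f g : C -> C) (x df dg : C) : is_derive f (g x) df -> is_derive g x dg ->
  is_derive (fun z => f (g z)) x (dg * df).
Proof. intros; exact (@is_derive_comp C_AbsRing C_NormedModule f g x df dg H (tr2 _ _ _ H0)). Qed.
Lemma dC_unique (f : C -> C) (x l1 l2 : C) : is_derive f x l1 -> is_derive f x l2 -> l1 = l2.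
Proof. intros H1 H2. rewrite <- (is_C_derive_unique _ _ _ H1). apply is_C_derive_unique; auto. Qed.
Lemma dC_ext_loc (f g : C -> C) (x l : C) : locally x (fun t => f t = g t) -> is_derive f x l -> is_derive g x l.
Proof. intros; apply (@is_derive_ext_loc C_AbsRing C_NormedModule f g x l); auto. first [exact (proj1 (locally_C x _) H) | exact (proj2 (locally_C x _) H)]. Qed.
Lemma dC_ext (f g : C -> C) (x l : C) : (forall t, f t = g t) -> is_derive f x l -> is_derive g x l.
Proof. intros; exact (@is_derive_ext C_AbsRing C_NormedModule f g x l H H0). Qed.

Lemma dC_quad (f : C -> C) (x l : C) (d0 K : R) : 0 < d0 -> 0 <= K ->
  (forall y, Cmod (y - x) < d0 -> Cmod (f y - f x - (y - x) * l) <= Rmult K (Cmod (y - x) ^ 2)%R) ->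
  is_derive f x l.
Proof.
  intros Hd0 HK H. split.
  - apply is_linear_scal_l.
  - intros x' Hx'. apply (@is_filter_lim_locally_unique _ (AbsRing_NormedModule C_AbsRing)) in Hx'. subst x'.
    intros eps.
    assert (Hd : 0 < Rmin d0 (eps / (K + 1))%R).
    { apply Rmin_pos; auto. apply Rdiv_lt_0_compat. apply cond_pos. lra. }
    exists (mkposreal _ Hd). intros y Hy. simpl in Hy.
    change (Cmod (y - x) < Rmin d0 (eps / (K + 1))%R) in Hy.
    change (Rle (Cmod (f y - f x - (y - x) * l)) (Rmult eps (Cmod (y - x)))).
    assert (H1 := H y (Rlt_le_trans _ _ _ Hy (Rmin_l _ _))).
    assert (H2 : Cmod (y - x) < (eps / (K + 1))%R) by (eapply Rlt_le_trans; [exact Hy| apply Rmin_r]).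
    assert (H3 : 0 <= Cmod (y - x)) by apply Cmod_ge_0.
    eapply Rle_trans; [exact H1|].
    assert (Rle (Rmult K (Cmod (y - x))) eps).
    { apply Rle_trans with (K * (eps / (K+1)))%R. apply Rmult_le_compat_l; lra.
      assert (0 < eps) by apply cond_pos.
      apply Rle_trans with ((K+1) * (eps/(K+1)))%R. apply Rmult_le_compat_r. 
      apply Rlt_le, Rdiv_lt_0_compat; lra. lra. right; field; lra. }
    simpl. nra.
Qed.

Lemma Cmod_2 : Cmod 2 = 2%R.
Proof. rewrite Cmod_R, Rabs_pos_eq; lra. Qed.

Lemma dC_inv0 (z0 : C) : z0 <> 0 -> is_derive (fun z => / z) z0 (- / (z0 * z0)).
Proof.
  intros Hz.
  assert (Ha : (0 < Cmod z0)%R) by (apply Cmod_gt_0; auto).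
  apply (dC_quad _ _ _ (Cmod z0 / 2) (2 / (Cmod z0 ^ 3))).
  - lra.
  - apply Rlt_le, Rdiv_lt_0_compat; [lra| apply pow_lt; lra].
  - intros y Hy.
    assert (Hb : (Cmod z0 / 2 < Cmod y)%R).
    { assert (T := Cmod_triangle (z0 - y) y).
      replace (z0 - y + y) with z0 in T by ring.
      replace (z0 - y) with (- (y - z0)) in T by ring. rewrite Cmod_opp in T. lra. }
    assert (Hy0 : y <> 0).
    { intro E; subst y; rewrite Cmod_0 in Hb; lra. }
    replace (/ y - / z0 - (y - z0) * - / (z0 * z0)) with ((y - z0) * (y - z0) / (y * (z0 * z0))) by (field; auto).
    rewrite Cmod_div by (apply Cmult_neq_0; auto; apply Cmult_neq_0; auto).
    rewrite !Cmod_mult.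
    set (m := Cmod (y - z0)) in *. set (a := Cmod z0) in *. set (b := Cmod y) in *.
    assert (0 <= m)%R by apply Cmod_ge_0.
    unfold Rdiv. rewrite (Rmult_comm 2).
    assert (/ (b * (a * a)) <= / (a ^ 3) * 2)%R.
    { replace (/ (a ^ 3) * 2)%R with (/ (a * a * a / 2))%R by (field; lra).
      apply Rinv_le_contravar. assert (0 < a*a*a)%R by (repeat apply Rmult_lt_0_compat; lra). lra.
      assert (0 < a*a)%R by nra. nra. }
    replace (m * m * / (b * (a * a)))%R with (m^2 * / (b * (a*a)))%R by ring.
    rewrite (Rmult_comm _ (m^2)). apply Rmult_le_compat_l; auto. apply pow2_ge_0.
Qed.

Lemma dC_inv (f : C -> C) (x df : C) : is_derive f x df -> f x <> 0 ->
  is_derive (fun z => / f z) x (- df / (f x * f x)).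
Proof.
  intros H Hf. eapply dC_eq. apply (dC_comp (fun z => / z) f). apply dC_inv0; auto. exact H. field; auto.
Qed.

Definition rt (z : C) : C :=
  (sqrt ((Cmod z + Re z) / 2), Im z / (2 * sqrt ((Cmod z + Re z) / 2)))%R.

Lemma Cmod_re (z : C) : (Re z <= Cmod z)%R.
Proof. eapply Rle_trans; [apply Rle_abs | apply re_le_Cmod]. Qed.
Lemma Cmod_re' (z : C) : (- Re z <= Cmod z)%R.
Proof. eapply Rle_trans; [apply Rle_abs | rewrite Rabs_Ropp; apply re_le_Cmod]. Qed.

Lemma rt_sq (z : C) : (0 < Cmod z + Re z)%R -> rt z * rt z = z.
Proof.
  destruct z as [x y]. unfold rt, Cmod, Re, Im. simpl. intros Hp.
  set (t := sqrt (x * (x * 1) + y * (y * 1))) in *.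
  assert (Ht : (t * t = x * x + y * y)%R).
  { unfold t. rewrite sqrt_sqrt. ring. nra. }
  set (s := sqrt ((t + x) / 2)).
  assert (Hs : (s * s = (t + x) / 2)%R) by (unfold s; rewrite sqrt_sqrt; lra).
  assert (Hs0 : (0 < s)%R) by (unfold s; apply sqrt_lt_R0; lra).
  unfold Cmult; simpl. f_equal.
  - replace (s * s - y / (2 * s) * (y / (2 * s)))%R with ((4 * (s*s) * (s*s) - y * y) / (4 * (s * s)))%R by (field; lra).
    rewrite Hs. field_simplify; [|lra]. 
    replace (y^2)%R with (t*t - x*x)%R by (rewrite Ht; ring). field. lra.
  - field. lra.
Qed.

Lemma rt_re (z : C) : (0 < Re z)%R -> (0 < Re (rt z))%R.
Proof.
  intros H. unfold rt; simpl. apply sqrt_lt_R0. assert (T := Cmod_re z). lra.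
Qed.

Lemma csqrt_ex (c : C) : exists s, s * s = c.
Proof.
  destruct (Rlt_or_le 0 (Cmod c + Re c)) as [H|H].
  - exists (rt c). apply rt_sq; auto.
  - destruct c as [x y]. unfold Cmod, Re in H; simpl in H.
    assert (T := Cmod_re' (x, y)). unfold Cmod, Re in T; simpl in T.
    assert (E : sqrt (x * (x * 1) + y * (y * 1)) = (- x)%R) by lra.
    assert (E2 : (x * (x * 1) + y * (y * 1) = (-x) * (-x))%R).
    { rewrite <- E. rewrite sqrt_sqrt. ring. nra. }
    assert (Hyy : (y * y = 0)%R) by (ring_simplify in E2; lra).
    assert (Hy : y = 0%R) by (apply Rsqr_0_uniq; exact Hyy). subst y.
    exists (0, sqrt (- x))%R. unfold Cmult; simpl.
    assert (Hx : (0 <= - x)%R) by (assert (S := sqrt_pos (x * (x * 1) + 0 * (0 * 1))); lra).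
    f_equal.
    + replace (0 * 0 - sqrt (- x) * sqrt (- x))%R with (- (sqrt (-x) * sqrt (-x)))%R by ring.
      rewrite sqrt_sqrt; lra.
    + ring.
Qed.

Lemma Calg (a b u v : C) : a * a = u -> b * b = v -> a + b <> 0 -> b <> 0 ->
  a - b - (u - v) * / (2 * b) = - ((u - v) * (u - v)) / ((a + b) * (a + b) * (2 * b)).
Proof. intros <- <- H1 H2. field; repeat split; auto; try (intro E; injection E; lra). Qed.

Lemma dC_sqrt (r : C -> C) z0 (d0 : R) : (0 < d0)%R ->
  (forall y, (Cmod (y - z0) < d0)%R -> r y * r y = y /\ (0 < Re (r y))%R) ->
  is_derive r z0 (/ (2 * r z0)).
Proof.
  intros Hd H.
  assert (H0 : (Cmod (z0 - z0) < d0)%R) by (replace (z0 - z0) with (RtoC 0) by ring; rewrite Cmod_0; lra).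
  destruct (H z0 H0) as [Hsq0 Hre0].
  set (s0 := Re (r z0)) in *.
  assert (Hm0 : (s0 <= Cmod (r z0))%R) by apply Cmod_re.
  assert (Hr0 : r z0 <> 0) by (apply Cmod_gt_0; lra).
  apply (dC_quad _ _ _ d0 (/ (2 * s0 ^ 2 * Cmod (r z0)))); auto.
  { apply Rlt_le, Rinv_0_lt_compat. assert (0 < s0^2)%R by (apply pow_lt; lra). 
    apply Rmult_lt_0_compat; lra. }
  intros y Hy. destruct (H y Hy) as [Hsq Hre].
  assert (Hsum : (s0 < Cmod (r y + r z0))%R).
  { eapply Rlt_le_trans; [|apply Cmod_re]. rewrite re_plus. unfold s0 in *. lra. }
  assert (Hnz : r y + r z0 <> 0) by (apply Cmod_gt_0; lra).
  rewrite (Calg (r y) (r z0) y z0 Hsq Hsq0 Hnz Hr0).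
  unfold Cdiv. rewrite Cmod_mult, Cmod_opp, Cmod_inv.
  2:{ repeat apply Cmult_neq_0; auto. intro E. injection E. lra. }
  rewrite !Cmod_mult, Cmod_2.
  set (m := Cmod (y - z0)) in *. set (q := Cmod (r y + r z0)) in *. set (b := Cmod (r z0)) in *.
  assert (0 <= m)%R by apply Cmod_ge_0.
  assert (0 < s0 ^ 2)%R by (apply pow_lt; lra).
  replace (m * m * / (q * q * (2 * b)))%R with (m^2 * / (q * q * (2 * b)))%R by ring.
  rewrite (Rmult_comm _ (m^2)). apply Rmult_le_compat_l; [apply pow2_ge_0|].
  apply Rinv_le_contravar. repeat apply Rmult_lt_0_compat; lra.
  assert (s0 * s0 <= q * q)%R by nra. simpl. 
  assert (0 < 2 * b)%R by lra. nra.
Qed.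

Lemma loc1 (U : C * C -> Prop) (p : C * C) :
  @open (prod_UniformSpace C_UniformSpace C_UniformSpace) U -> U p ->
  @locally C_UniformSpace (fst p) (fun z => U (z, snd p)).
Proof.
  intros HU Hp. destruct (HU p Hp) as [eps He]. exists eps. intros z Hz.
  apply He. split; [exact Hz | apply ball_center].
Qed.

Lemma loc2 (U : C * C -> Prop) (p : C * C) :
  @open (prod_UniformSpace C_UniformSpace C_UniformSpace) U -> U p ->
  @locally C_UniformSpace (snd p) (fun z => U (fst p, z)).
Proof.
  intros HU Hp. destruct (HU p Hp) as [eps He]. exists eps. intros z Hz.
  apply He. split; [apply ball_center | exact Hz].
Qed.

Lemma re_minus (a b : C) : Re (a - b) = (Re a - Re b)%R.
Proof. unfold Cminus. rewrite re_plus, re_opp. ring. Qed.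

Lemma open_re : @open (AbsRing_UniformSpace C_AbsRing) (fun w : C => (0 < Re w)%R).
Proof.
  intros w Hw. exists (mkposreal _ Hw). intros y Hy.
  change (Cmod (y - w) < Re w)%R in Hy.
  assert (T := Cmod_re' (y - w)). rewrite re_minus in T. lra.
Qed.

Definition CC := prod_UniformSpace C_UniformSpace C_UniformSpace.
Definition CA := AbsRing_UniformSpace C_AbsRing.

Lemma cont_fst (q : C * C) : @continuous CC CA fst q.
Proof.
  destruct q as [x y]. intros P HP. apply (continuous_fst x y).
  apply (proj1 (locally_C _ _)) || apply (proj2 (locally_C _ _)). exact HP.
Qed.
Lemma cont_snd (q : C * C) : @continuous CC CA snd q.
Proof.
  destruct q as [x y]. intros P HP. apply (continuous_snd x y).
  apply (proj1 (locally_C _ _)) || apply (proj2 (locally_C _ _)). exact HP.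
Qed.
Lemma cont_const (c : C) (q : C * C) : @continuous CC CA (fun _ => c) q.
Proof. apply continuous_const. Qed.
Lemma cont_plus (f g : C * C -> C) q : @continuous CC CA f q -> @continuous CC CA g q ->
  @continuous CC CA (fun x => f x + g x) q.
Proof. intros; exact (@continuous_plus CC C_AbsRing (AbsRing_NormedModule C_AbsRing) f g q H H0). Qed.
Lemma cont_minus (f g : C * C -> C) q : @continuous CC CA f q -> @continuous CC CA g q ->
  @continuous CC CA (fun x => f x - g x) q.
Proof. intros; exact (@continuous_minus CC C_AbsRing (AbsRing_NormedModule C_AbsRing) f g q H H0). Qed.
Lemma cont_mult (f g : C * C -> C) q : @continuous CC CA f q -> @continuous CC CA g q ->
  @continuous CC CA (fun x => f x * g x) q.
Proof. intros; exact (@continuous_mult CC C_AbsRing f g q H H0). Qed.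

Ltac cstep := match goal with
| |- continuous (fun x => ?a) _ => let t := type of a in apply cont_const
| |- continuous (fun x => fst x) _ => apply cont_fst
| |- continuous (fun x => snd x) _ => apply cont_snd
| |- continuous fst _ => apply cont_fst
| |- continuous snd _ => apply cont_snd
| |- continuous (fun x => _ + _) _ => apply cont_plus
| |- continuous (fun x => _ - _) _ => apply cont_minus
| |- continuous (fun x => _ * _) _ => apply cont_mult
end.
Ltac ctac := repeat cstep.

Lemma d_rt (f : C -> C) (x df : C) : is_derive f x df -> (0 < Re (f x))%R ->
  is_derive (fun z => rt (f z)) x (df * / (2 * rt (f x))).
Proof.
  intros H Hr. apply dC_comp; auto.
  apply (dC_sqrt rt (f x) (Re (f x))); auto.
  intros y Hy. assert (T := Cmod_re' (y - f x)). rewrite re_minus in T.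
  assert (Hy' : (0 < Re y)%R) by lra. split.
  - apply rt_sq. assert (T2 := Cmod_re y). lra.
  - apply rt_re; auto.
Qed.

Lemma dC_div (f g : C -> C) (x df dg : C) : is_derive f x df -> is_derive g x dg -> g x <> 0 ->
  is_derive (fun z => f z / g z) x (df * / g x + f x * (- dg / (g x * g x))).
Proof. intros. unfold Cdiv. apply (dC_mult f (fun z => / g z)); auto. apply dC_inv; auto. Qed.

Lemma dC_scal (a x : C) : is_derive (Cmult a) x a.
Proof. eapply dC_eq. apply (dC_mult (fun _ => a) (fun z => z)). apply dC_const. apply dC_id. cbv beta. ring. Qed.
Lemma dC_cplus (a x : C) : is_derive (Cplus a) x (RtoC 1).
Proof. eapply dC_eq. apply (dC_plus (fun _ => a) (fun z => z)). apply dC_const. apply dC_id. cbv beta. ring. Qed.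
Lemma dC_cminus (a x : C) : is_derive (Cminus a) x (RtoC (-1)).
Proof. eapply dC_eq. apply (dC_minus (fun _ => a) (fun z => z)). apply dC_const. apply dC_id. cbv beta. ring. Qed.

Ltac dstep := match goal with
| |- is_derive (Cmult _) _ _ => apply dC_scal
| |- is_derive (Cplus _) _ _ => apply dC_cplus
| |- is_derive (Cminus _) _ _ => apply dC_cminus
| |- is_derive (fun z => ?a) _ _ => let t := type of a in apply dC_const
| |- is_derive (fun z => z) _ _ => apply dC_id
| |- is_derive (fun z => _ + _) _ _ => apply dC_plus
| |- is_derive (fun z => _ - _) _ _ => apply dC_minus
| |- is_derive (fun z => - _) _ _ => apply dC_opp
| |- is_derive (fun z => _ * _) _ _ => apply dC_mult
| |- is_derive (fun z => _ / _) _ _ => apply dC_div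
| |- is_derive (fun z => / _) _ _ => apply dC_inv
| |- is_derive (fun z => rt _) _ _ => apply d_rt
end.
Ltac dtac := repeat dstep.

Lemma Cmult_eq0 (a b : C) : a * b = 0 -> a <> 0 -> b = 0.
Proof. intros H Ha. assert (E : b = / a * (a * b)) by (field; auto). rewrite E, H. ring. Qed.

Lemma Fa_sq (x1 x2 x3 : C) : (2 * x3 + x1 * x2 - 0) * (2 * x3 + x1 * x2 - 0)
   = (4 - x1 * x1) * (4 - x2 * x2) + 4 * Fa 0 0 0 4 x1 x2 x3.
Proof. unfold Fa. ring. Qed.

Lemma back_nz (U : C * C -> Prop) h q : chart 0 0 0 4 U h -> U q ->
  (2 * h q + fst q * snd q - 0) * (2 * h q + fst q * snd q - 0) = (4 - fst q * fst q) * (4 - snd q * snd q)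
  /\ 4 - fst q * fst q <> 0 /\ 4 - snd q * snd q <> 0.
Proof.
  intros [_ [_ Hc]] Hq. destruct (Hc q Hq) as [HF HD].
  rewrite Fa_sq, HF. 
  assert (E : (4 - fst q * fst q) * (4 - snd q * snd q) <> 0).
  { assert (E2 : (4 - fst q * fst q) * (4 - snd q * snd q) = (2 * h q + fst q * snd q - 0) * (2 * h q + fst q * snd q - 0))
      by (rewrite Fa_sq, HF; ring).
    rewrite E2. apply Cmult_neq_0; auto. }
  split; [ring|]. split; intro Z; apply E; rewrite Z; ring.
Qed.

Lemma sq_inv (D P : C) : D * D = P -> D <> 0 -> RtoC 1 = P * (/ D * / D).
Proof. intros <- H. field. auto. Qed.

Lemma div_eq (a b c : C) : b <> 0 -> a * b = c -> c / b = a.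
Proof. intros H <-. field. auto. Qed.

Lemma Cinv_nz (a : C) : a <> 0 -> / a <> 0.
Proof. intros H E. apply C1_nz. rewrite <- (Cinv_r a H), E. ring. Qed.

Lemma back_A (U : C * C -> Prop) h (G : christoffel) q : chart 0 0 0 4 U h -> is_hess 0 U h G -> U q ->
  G I1 I1 I1 q * (4 - fst q * fst q) = fst q.
Proof.
  intros Hch HG Hq. destruct q as [q1 q2].
  pose proof Hch as [HUo [_ Hc]].
  destruct (back_nz U h (q1, q2) Hch Hq) as [_ [Hn1 Hn2]]. cbn [fst snd] in *.
  destruct HG as [_ Hp]. destruct (Hp _ Hq) as [Hs [Hom [H1 H2]]].
  specialize (Hom I1 I1 I2). cbn [pd om sum2 fst snd] in Hom.
  unfold sum2, om in Hom; cbv beta iota in Hom.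
  rewrite (Hs I2 I1 I2), !H1, !H2 in Hom. cbn [fst snd] in Hom.
  set (A := G I1 I1 I1 (q1, q2)) in *.
  set (W := fun z => / (2 * h (z, q2) + z * q2 - 0)).
  assert (HW : is_derive W q1 (A * W q1)). { eapply dC_eq; [exact Hom|]. unfold W. cbv beta. ring. }
  assert (Hpoly : is_derive (fun z => (4 - z * z) * (4 - q2 * q2)) q1 (-2 * q1 * (4 - q2 * q2))).
  { eapply dC_eq. dtac. cbv beta. ring. }
  assert (E0 : forall v : C, is_derive (fun z => (4 - z * z) * (4 - q2 * q2) * (W z * W z)) q1 v -> v = 0).
  { intros v Hv. apply (dC_unique _ q1 _ _ Hv).
    apply (dC_ext_loc (fun _ => 1)); [|apply dC_const].
    eapply filter_imp; [|exact (loc1 U (q1, q2) HUo Hq)].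
    intros z Hz. cbn [fst snd] in Hz.
    destruct (back_nz U h (z, q2) Hch Hz) as [Hsq _]. cbn [fst snd] in Hsq.
    destruct (Hc _ Hz) as [_ HD]. cbn [fst snd] in HD.
    unfold W. cbv beta. exact (sq_inv _ _ Hsq HD). }
  specialize (E0 _ (dC_mult _ _ _ _ _ Hpoly (dC_mult _ _ _ _ _ HW HW))).
  destruct (Hc _ Hq) as [_ HD]. cbn [fst snd] in HD.
  assert (Hw : W q1 <> 0) by (unfold W; apply Cinv_nz; auto).
  assert (E3 : (W q1 * W q1 * (2 * (4 - q2 * q2))) * (A * (4 - q1 * q1) - q1) = 0).
  { rewrite <- E0. ring. }
  apply Cmult_eq0 in E3.
  - apply Ceq_minus. exact E3.
  - repeat apply Cmult_neq_0; auto. intro E; injection E; lra.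
Qed.

Lemma back_B (U : C * C -> Prop) h (G : christoffel) q : chart 0 0 0 4 U h -> is_hess 0 U h G -> U q ->
  G I2 I2 I2 q * (4 - snd q * snd q) = snd q.
Proof.
  intros Hch HG Hq. destruct q as [q1 q2].
  pose proof Hch as [HUo [_ Hc]].
  destruct (back_nz U h (q1, q2) Hch Hq) as [_ [Hn1 Hn2]]. cbn [fst snd] in *.
  destruct HG as [_ Hp]. destruct (Hp _ Hq) as [Hs [Hom [H1 H2]]].
  specialize (Hom I2 I1 I2). cbn [pd om sum2 fst snd] in Hom.
  unfold sum2, om in Hom; cbv beta iota in Hom.
  rewrite (Hs I1 I2 I1), !H1, !H2 in Hom. cbn [fst snd] in Hom.
  set (A := G I2 I2 I2 (q1, q2)) in *.
  set (W := fun z => / (2 * h (q1, z) + q1 * z - 0)).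
  assert (HW : is_derive W q2 (A * W q2)). { eapply dC_eq; [exact Hom|]. unfold W. cbv beta. ring. }
  assert (Hpoly : is_derive (fun z => (4 - q1 * q1) * (4 - z * z)) q2 (-2 * q2 * (4 - q1 * q1))).
  { eapply dC_eq. dtac. cbv beta. ring. }
  assert (E0 : forall v : C, is_derive (fun z => (4 - q1 * q1) * (4 - z * z) * (W z * W z)) q2 v -> v = 0).
  { intros v Hv. apply (dC_unique _ q2 _ _ Hv).
    apply (dC_ext_loc (fun _ => 1)); [|apply dC_const].
    eapply filter_imp; [|exact (loc2 U (q1, q2) HUo Hq)].
    intros z Hz. cbn [fst snd] in Hz.
    destruct (back_nz U h (q1, z) Hch Hz) as [Hsq _]. cbn [fst snd] in Hsq.
    destruct (Hc _ Hz) as [_ HD]. cbn [fst snd] in HD.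
    unfold W. cbv beta. exact (sq_inv _ _ Hsq HD). }
  specialize (E0 _ (dC_mult _ _ _ _ _ Hpoly (dC_mult _ _ _ _ _ HW HW))).
  destruct (Hc _ Hq) as [_ HD]. cbn [fst snd] in HD.
  assert (Hw : W q2 <> 0) by (unfold W; apply Cinv_nz; auto).
  assert (E3 : (W q2 * W q2 * (2 * (4 - q1 * q1))) * (A * (4 - q2 * q2) - q2) = 0).
  { rewrite <- E0. ring. }
  apply Cmult_eq0 in E3.
  - apply Ceq_minus. exact E3.
  - repeat apply Cmult_neq_0; auto. intro E; injection E; lra.
Qed.

Lemma back (U : C * C -> Prop) h (G : christoffel) : chart 0 0 0 4 U h -> is_hess 0 U h G -> flat U G.
Proof.
  intros Hch HG p Hpu.
  pose proof Hch as [HUo _].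
  pose proof HG as [Hhol Hp].
  set (dG := fun d k i j => proj1_sig (constructive_indefinite_description _ (Hhol k i j p Hpu d))).
  assert (Hd : forall d k i j, pd d (G k i j) p (dG d k i j)) by (intros; unfold dG; apply proj2_sig).
  exists dG. split; [exact Hd|]. clearbody dG.
  destruct p as [p1 p2].
  assert (Z : forall q, U q -> G I1 I1 I2 q = 0 /\ G I1 I2 I2 q = 0 /\ G I1 I2 I1 q = 0 /\
     G I2 I1 I1 q = 0 /\ G I2 I2 I1 q = 0 /\ G I2 I1 I2 q = 0).
  { intros q Hq. destruct (Hp q Hq) as [Hs [_ [H1 H2]]].
    rewrite (Hs I1 I2 I1), (Hs I2 I1 I2), !H1, !H2. repeat split. }
  assert (DZ1 : forall k i j, (forall q, U q -> G k i j q = 0) -> dG I1 k i j = 0).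
  { intros k i j Hz. specialize (Hd I1 k i j). cbn [pd fst snd] in Hd.
    apply (dC_unique _ p1 _ _ Hd). apply (dC_ext_loc (fun _ => 0)); [|apply dC_const].
    eapply filter_imp; [|exact (loc1 U (p1, p2) HUo Hpu)].
    intros z Hz'. cbn [fst snd] in Hz'. cbv beta. symmetry. apply Hz. exact Hz'. }
  assert (DZ2 : forall k i j, (forall q, U q -> G k i j q = 0) -> dG I2 k i j = 0).
  { intros k i j Hz. specialize (Hd I2 k i j). cbn [pd fst snd] in Hd.
    apply (dC_unique _ p2 _ _ Hd). apply (dC_ext_loc (fun _ => 0)); [|apply dC_const].
    eapply filter_imp; [|exact (loc2 U (p1, p2) HUo Hpu)].
    intros z Hz'. cbn [fst snd] in Hz'. cbv beta. symmetry. apply Hz. exact Hz'. }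
  assert (DA : dG I2 I1 I1 I1 = 0).
  { specialize (Hd I2 I1 I1 I1). cbn [pd fst snd] in Hd.
    apply (dC_unique _ p2 _ _ Hd). apply (dC_ext_loc (fun _ => p1 / (4 - p1 * p1))); [|apply dC_const].
    eapply filter_imp; [|exact (loc2 U (p1, p2) HUo Hpu)].
    intros z Hz'. cbn [fst snd] in Hz'. cbv beta.
    assert (E := back_A U h G (p1, z) Hch HG Hz').
    destruct (back_nz U h (p1, z) Hch Hz') as [_ [Hn _]]. cbn [fst snd] in E, Hn.
    exact (div_eq _ _ _ Hn E). }
  assert (DB : dG I1 I2 I2 I2 = 0).
  { specialize (Hd I1 I2 I2 I2). cbn [pd fst snd] in Hd.
    apply (dC_unique _ p1 _ _ Hd). apply (dC_ext_loc (fun _ => p2 / (4 - p2 * p2))); [|apply dC_const].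
    eapply filter_imp; [|exact (loc1 U (p1, p2) HUo Hpu)].
    intros z Hz'. cbn [fst snd] in Hz'. cbv beta.
    assert (E := back_B U h G (z, p2) Hch HG Hz').
    destruct (back_nz U h (z, p2) Hch Hz') as [_ [_ Hn]]. cbn [fst snd] in E, Hn.
    exact (div_eq _ _ _ Hn E). }
  assert (Z1 := fun q Hq => proj1 (Z q Hq)).
  assert (Z2 := fun q Hq => proj1 (proj2 (Z q Hq))).
  assert (Z3 := fun q Hq => proj1 (proj2 (proj2 (Z q Hq)))).
  assert (Z4 := fun q Hq => proj1 (proj2 (proj2 (proj2 (Z q Hq))))).
  assert (Z5 := fun q Hq => proj1 (proj2 (proj2 (proj2 (proj2 (Z q Hq)))))).
  assert (Z6 := fun q Hq => proj2 (proj2 (proj2 (proj2 (proj2 (Z q Hq)))))).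
  cbv beta in Z1, Z2, Z3, Z4, Z5, Z6.
  pose proof (DZ1 _ _ _ Z1). pose proof (DZ1 _ _ _ Z2). pose proof (DZ1 _ _ _ Z3).
  pose proof (DZ1 _ _ _ Z4). pose proof (DZ1 _ _ _ Z5). pose proof (DZ1 _ _ _ Z6).
  pose proof (DZ2 _ _ _ Z1). pose proof (DZ2 _ _ _ Z2). pose proof (DZ2 _ _ _ Z3).
  pose proof (DZ2 _ _ _ Z4). pose proof (DZ2 _ _ _ Z5). pose proof (DZ2 _ _ _ Z6).
  pose proof (Z1 _ Hpu). pose proof (Z2 _ Hpu). pose proof (Z3 _ Hpu).
  pose proof (Z4 _ Hpu). pose proof (Z5 _ Hpu). pose proof (Z6 _ Hpu).
  clear Z Z1 Z2 Z3 Z4 Z5 Z6 DZ1 DZ2 Hd Hp Hhol HG Hch.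
  intros l k i j. destruct l, k, i, j; unfold sum2;
    repeat match goal with H : ?x = RtoC 0 |- context [?x] => rewrite H end; ring.
Qed.

Definition Dl (a1 a2 a3 a4 x1 x2 : C) : C :=
  (x1 * x2 - a3) * (x1 * x2 - a3) - 4 * (x1 * x1 + x2 * x2 - a1 * x1 - a2 * x2 - a4).
Definition Dl1 (a1 a2 a3 a4 x1 x2 : C) : C := 2 * (x1 * x2 - a3) * x2 - 8 * x1 + 4 * a1.
Definition Dl2 (a1 a2 a3 a4 x1 x2 : C) : C := 2 * (x1 * x2 - a3) * x1 - 8 * x2 + 4 * a2.
Definition Qp (a1 a2 a3 a4 x1 x2 : C) : C :=
  Dl a1 a2 a3 a4 x1 x2 * (4 * x1 * x2 - 2 * a3) - Dl1 a1 a2 a3 a4 x1 x2 * Dl2 a1 a2 a3 a4 x1 x2.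

Lemma C_nz (r : R) : r <> 0%R -> RtoC r <> 0.
Proof. intros H E. injection E. auto. Qed.

Lemma pt_exists (a1 a2 a3 a4 : C) : ~ (a1 = 0 /\ a2 = 0 /\ a3 = 0 /\ a4 = 4) ->
  exists x1 x2, Qp a1 a2 a3 a4 x1 x2 <> 0 /\ Dl a1 a2 a3 a4 x1 x2 <> 0.
Proof.
  intros Hn. apply NNPP; intro Hno. apply Hn.
  assert (H : forall x1 x2, Qp a1 a2 a3 a4 x1 x2 * Dl a1 a2 a3 a4 x1 x2 = 0).
  { intros x1 x2. destruct (Ceq_dec (Qp a1 a2 a3 a4 x1 x2) 0) as [E|E]; [rewrite E; ring|].
    destruct (Ceq_dec (Dl a1 a2 a3 a4 x1 x2) 0) as [E'|E']; [rewrite E'; ring|].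
    exfalso; apply Hno; eauto. }
  assert (Ha3 : a3 = 0).
  { assert (E : 768 * a3 = Qp a1 a2 a3 a4 0 0 * Dl a1 a2 a3 a4 0 0 - 4 * (Qp a1 a2 a3 a4 0 1 * Dl a1 a2 a3 a4 0 1)
       + 6 * (Qp a1 a2 a3 a4 0 2 * Dl a1 a2 a3 a4 0 2) - 4 * (Qp a1 a2 a3 a4 0 3 * Dl a1 a2 a3 a4 0 3)
       + Qp a1 a2 a3 a4 0 4 * Dl a1 a2 a3 a4 0 4) by (unfold Qp, Dl, Dl1, Dl2; ring).
    rewrite !H in E. apply (Cmult_eq0 768); [rewrite E; ring | apply C_nz; lra]. }
  subst a3.
  assert (Ha1 : a1 = 0).
  { assert (E : -768 * a1 = - (Qp a1 a2 0 a4 0 0 * Dl a1 a2 0 a4 0 0) + 3 * (Qp a1 a2 0 a4 0 1 * Dl a1 a2 0 a4 0 1)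
       - 3 * (Qp a1 a2 0 a4 0 2 * Dl a1 a2 0 a4 0 2) + Qp a1 a2 0 a4 0 3 * Dl a1 a2 0 a4 0 3) by (unfold Qp, Dl, Dl1, Dl2; ring).
    rewrite !H in E. apply (Cmult_eq0 (-768)); [rewrite E; ring | apply C_nz; lra]. }
  subst a1.
  assert (Ha2 : a2 = 0).
  { assert (E : -768 * a2 = - (Qp 0 a2 0 a4 0 0 * Dl 0 a2 0 a4 0 0) + 3 * (Qp 0 a2 0 a4 1 0 * Dl 0 a2 0 a4 1 0)
       - 3 * (Qp 0 a2 0 a4 2 0 * Dl 0 a2 0 a4 2 0) + Qp 0 a2 0 a4 3 0 * Dl 0 a2 0 a4 3 0) by (unfold Qp, Dl, Dl1, Dl2; ring).
    rewrite !H in E. apply (Cmult_eq0 (-768)); [rewrite E; ring | apply C_nz; lra]. }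
  subst a2.
  assert (Ha4 : a4 - 4 = 0).
  { assert (E : -288 * (a4 - 4) = - (Qp 0 0 0 a4 1 0 * Dl 0 0 0 a4 1 0) + 3 * (Qp 0 0 0 a4 1 1 * Dl 0 0 0 a4 1 1)
       - 3 * (Qp 0 0 0 a4 1 2 * Dl 0 0 0 a4 1 2) + Qp 0 0 0 a4 1 3 * Dl 0 0 0 a4 1 3) by (unfold Qp, Dl, Dl1, Dl2; ring).
    rewrite !H in E. apply (Cmult_eq0 (-288)); [rewrite E; ring | apply C_nz; lra]. }
  repeat split; auto. apply Ceq_minus; auto.
Qed.

Definition Phi (a1 a2 a3 a4 c : C) (q : C * C) : C := Dl a1 a2 a3 a4 (fst q) (snd q) / c.
Definition Uf (a1 a2 a3 a4 c : C) (q : C * C) : Prop := (0 < Re (Phi a1 a2 a3 a4 c q))%R.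
Definition Sf (a1 a2 a3 a4 c s0 : C) (q : C * C) : C := s0 * rt (Phi a1 a2 a3 a4 c q).
Definition hf (a1 a2 a3 a4 c s0 : C) (q : C * C) : C :=
  (Sf a1 a2 a3 a4 c s0 q - (fst q * snd q - a3)) / 2.
Definition Af (a1 a2 a3 a4 : C) (q : C * C) : C :=
  - Dl1 a1 a2 a3 a4 (fst q) (snd q) / (2 * Dl a1 a2 a3 a4 (fst q) (snd q)).
Definition Bf (a1 a2 a3 a4 : C) (q : C * C) : C :=
  - Dl2 a1 a2 a3 a4 (fst q) (snd q) / (2 * Dl a1 a2 a3 a4 (fst q) (snd q)).
Definition Gf (a1 a2 a3 a4 : C) : christoffel := fun k i j q =>
  match k, i, j with
  | I1, I1, I1 => Af a1 a2 a3 a4 q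
  | I2, I2, I2 => Bf a1 a2 a3 a4 q
  | _, _, _ => 0
  end.


Lemma dDl_1 (a1 a2 a3 a4 x1 x2 : C) : is_derive (fun z => Dl a1 a2 a3 a4 z x2) x1 (Dl1 a1 a2 a3 a4 x1 x2).
Proof. unfold Dl, Dl1. eapply dC_eq; [dtac | cbv beta; ring]. Qed.
Lemma dDl_2 (a1 a2 a3 a4 x1 x2 : C) : is_derive (fun z => Dl a1 a2 a3 a4 x1 z) x2 (Dl2 a1 a2 a3 a4 x1 x2).
Proof. unfold Dl, Dl2. eapply dC_eq; [dtac | cbv beta; ring]. Qed.
Lemma dDl1_1 (a1 a2 a3 a4 x1 x2 : C) : is_derive (fun z => Dl1 a1 a2 a3 a4 z x2) x1 (2 * x2 * x2 - 8).
Proof. unfold Dl1. eapply dC_eq; [dtac | cbv beta; ring]. Qed.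
Lemma dDl1_2 (a1 a2 a3 a4 x1 x2 : C) : is_derive (fun z => Dl1 a1 a2 a3 a4 x1 z) x2 (4 * x1 * x2 - 2 * a3).
Proof. unfold Dl1. eapply dC_eq; [dtac | cbv beta; ring]. Qed.
Lemma dDl2_1 (a1 a2 a3 a4 x1 x2 : C) : is_derive (fun z => Dl2 a1 a2 a3 a4 z x2) x1 (4 * x1 * x2 - 2 * a3).
Proof. unfold Dl2. eapply dC_eq; [dtac | cbv beta; ring]. Qed.
Lemma dDl2_2 (a1 a2 a3 a4 x1 x2 : C) : is_derive (fun z => Dl2 a1 a2 a3 a4 x1 z) x2 (2 * x1 * x1 - 8).
Proof. unfold Dl2. eapply dC_eq; [dtac | cbv beta; ring]. Qed.

Ltac dstepF := match goal with
| |- is_derive (fun z => Dl _ _ _ _ z _) _ _ => apply dDl_1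
| |- is_derive (fun z => Dl _ _ _ _ _ z) _ _ => apply dDl_2
| |- is_derive (fun z => Dl1 _ _ _ _ z _) _ _ => apply dDl1_1
| |- is_derive (fun z => Dl1 _ _ _ _ _ z) _ _ => apply dDl1_2
| |- is_derive (fun z => Dl2 _ _ _ _ z _) _ _ => apply dDl2_1
| |- is_derive (fun z => Dl2 _ _ _ _ _ z) _ _ => apply dDl2_2
| |- is_derive (Dl _ _ _ _ _) _ _ => apply dDl_2
| |- is_derive (Dl1 _ _ _ _ _) _ _ => apply dDl1_2
| |- is_derive (Dl2 _ _ _ _ _) _ _ => apply dDl2_2
| _ => dstep
end.
Ltac dtacF := repeat dstepF.

Lemma Uf_facts (a1 a2 a3 a4 c s0 : C) q : c <> 0 -> s0 * s0 = c -> Uf a1 a2 a3 a4 c q ->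
  Dl a1 a2 a3 a4 (fst q) (snd q) <> 0 /\
  rt (Phi a1 a2 a3 a4 c q) * rt (Phi a1 a2 a3 a4 c q) = Phi a1 a2 a3 a4 c q /\
  rt (Phi a1 a2 a3 a4 c q) <> 0 /\ s0 <> 0 /\
  Sf a1 a2 a3 a4 c s0 q * Sf a1 a2 a3 a4 c s0 q = Dl a1 a2 a3 a4 (fst q) (snd q) /\
  Sf a1 a2 a3 a4 c s0 q <> 0.
Proof.
  intros Hc Hs Hu. unfold Uf in Hu.
  assert (HP : Phi a1 a2 a3 a4 c q <> 0).
  { intro E. rewrite E in Hu. simpl in Hu. lra. }
  assert (HD : Dl a1 a2 a3 a4 (fst q) (snd q) <> 0).
  { intro E. apply HP. unfold Phi. rewrite E. field. auto. }
  assert (Hr : rt (Phi a1 a2 a3 a4 c q) * rt (Phi a1 a2 a3 a4 c q) = Phi a1 a2 a3 a4 c q).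
  { apply rt_sq. assert (T := Cmod_re (Phi a1 a2 a3 a4 c q)). lra. }
  assert (Hr0 : rt (Phi a1 a2 a3 a4 c q) <> 0).
  { intro E. assert (T := rt_re _ Hu). rewrite E in T. simpl in T. lra. }
  assert (Hs0 : s0 <> 0) by (intro E; apply Hc; rewrite <- Hs, E; ring).
  assert (HS : Sf a1 a2 a3 a4 c s0 q * Sf a1 a2 a3 a4 c s0 q = Dl a1 a2 a3 a4 (fst q) (snd q)).
  { unfold Sf. transitivity (s0 * s0 * (rt (Phi a1 a2 a3 a4 c q) * rt (Phi a1 a2 a3 a4 c q))); [ring|].
    rewrite Hr, Hs. unfold Phi. field. auto. }
  repeat split; auto.
  unfold Sf. apply Cmult_neq_0; auto.
Qed.

Lemma dS1 (a1 a2 a3 a4 c s0 q1 q2 : C) : c <> 0 -> s0 * s0 = c -> Uf a1 a2 a3 a4 c (q1, q2) ->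
  is_derive (fun z => Sf a1 a2 a3 a4 c s0 (z, q2)) q1
    (Dl1 a1 a2 a3 a4 q1 q2 / (2 * Sf a1 a2 a3 a4 c s0 (q1, q2))).
Proof.
  intros Hc Hs Hu. destruct (Uf_facts a1 a2 a3 a4 c s0 (q1, q2) Hc Hs Hu) as [HD [Hr [Hr0 [Hs0 _]]]].
  unfold Sf, Phi in *. cbn [fst snd] in *.
  eapply dC_eq.
  { apply dC_mult; [apply dC_const|]. apply d_rt; [|exact Hu].
    apply dC_div; [apply dDl_1 | apply dC_const | cbv beta; exact Hc]. }
  cbv beta. set (r := rt (Dl a1 a2 a3 a4 q1 q2 / c)) in *.
  rewrite <- Hs. field. repeat split; auto; try (apply C_nz; lra).
Qed.

Lemma dS2 (a1 a2 a3 a4 c s0 q1 q2 : C) : c <> 0 -> s0 * s0 = c -> Uf a1 a2 a3 a4 c (q1, q2) ->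
  is_derive (fun z => Sf a1 a2 a3 a4 c s0 (q1, z)) q2
    (Dl2 a1 a2 a3 a4 q1 q2 / (2 * Sf a1 a2 a3 a4 c s0 (q1, q2))).
Proof.
  intros Hc Hs Hu. destruct (Uf_facts a1 a2 a3 a4 c s0 (q1, q2) Hc Hs Hu) as [HD [Hr [Hr0 [Hs0 _]]]].
  unfold Sf, Phi in *. cbn [fst snd] in *.
  eapply dC_eq.
  { apply dC_mult; [apply dC_const|]. apply d_rt; [|exact Hu].
    apply dC_div; [apply dDl_2 | apply dC_const | cbv beta; exact Hc]. }
  cbv beta. set (r := rt (Dl a1 a2 a3 a4 q1 q2 / c)) in *.
  rewrite <- Hs. field. repeat split; auto; try (apply C_nz; lra).
Qed.

Lemma hf_D (a1 a2 a3 a4 c s0 : C) q :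
  2 * hf a1 a2 a3 a4 c s0 q + fst q * snd q - a3 = Sf a1 a2 a3 a4 c s0 q.
Proof. unfold hf. field. Qed.

Lemma dw1 (a1 a2 a3 a4 c s0 q1 q2 : C) : c <> 0 -> s0 * s0 = c -> Uf a1 a2 a3 a4 c (q1, q2) ->
  is_derive (fun z => / (2 * hf a1 a2 a3 a4 c s0 (z, q2) + z * q2 - a3)) q1
    (Af a1 a2 a3 a4 (q1, q2) * / (2 * hf a1 a2 a3 a4 c s0 (q1, q2) + q1 * q2 - a3)).
Proof.
  intros Hc Hs Hu. destruct (Uf_facts a1 a2 a3 a4 c s0 (q1, q2) Hc Hs Hu) as [HD [_ [_ [_ [HSS HS0]]]]].
  cbn [fst snd] in *.
  apply (dC_ext (fun z => / Sf a1 a2 a3 a4 c s0 (z, q2))).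
  { intros t. now rewrite <- (hf_D a1 a2 a3 a4 c s0 (t, q2)). }
  eapply dC_eq. { apply dC_inv; [apply dS1; auto | exact HS0]. }
  assert (E := hf_D a1 a2 a3 a4 c s0 (q1, q2)). cbn [fst snd] in E. rewrite E. unfold Af. cbn [fst snd].
  rewrite <- HSS. field. repeat split; auto; try (apply C_nz; lra).
Qed.

Lemma dw2 (a1 a2 a3 a4 c s0 q1 q2 : C) : c <> 0 -> s0 * s0 = c -> Uf a1 a2 a3 a4 c (q1, q2) ->
  is_derive (fun z => / (2 * hf a1 a2 a3 a4 c s0 (q1, z) + q1 * z - a3)) q2
    (Bf a1 a2 a3 a4 (q1, q2) * / (2 * hf a1 a2 a3 a4 c s0 (q1, q2) + q1 * q2 - a3)).
Proof.
  intros Hc Hs Hu. destruct (Uf_facts a1 a2 a3 a4 c s0 (q1, q2) Hc Hs Hu) as [HD [_ [_ [_ [HSS HS0]]]]].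
  cbn [fst snd] in *.
  apply (dC_ext (fun z => / Sf a1 a2 a3 a4 c s0 (q1, z))).
  { intros t. now rewrite <- (hf_D a1 a2 a3 a4 c s0 (q1, t)). }
  eapply dC_eq. { apply dC_inv; [apply dS2; auto | exact HS0]. }
  assert (E := hf_D a1 a2 a3 a4 c s0 (q1, q2)). cbn [fst snd] in E. rewrite E. unfold Bf. cbn [fst snd].
  rewrite <- HSS. field. repeat split; auto; try (apply C_nz; lra).
Qed.

Ltac const_or_F := match goal with
| |- exists l, is_derive (fun z => ?a) _ l => let t := type of a in exists (RtoC 0); apply dC_const
| |- _ => eexists; dtacF
end.

Lemma hess_ok (a1 a2 a3 a4 c s0 : C) : c <> 0 -> s0 * s0 = c ->
  is_hess a3 (Uf a1 a2 a3 a4 c) (hf a1 a2 a3 a4 c s0) (Gf a1 a2 a3 a4).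
Proof.
  intros Hc Hs. split.
  - intros k i j [q1 q2] Hu d.
    destruct (Uf_facts a1 a2 a3 a4 c s0 (q1, q2) Hc Hs Hu) as [HD _]. cbn [fst snd] in HD.
    destruct k, i, j; destruct d; cbn [pd Gf fst snd]; unfold Af, Bf; cbn [fst snd];
      const_or_F; cbv beta; apply Cmult_neq_0; auto; apply C_nz; lra.
  - intros [q1 q2] Hu. split; [intros k i j; destruct k, i, j; reflexivity|].
    split; [| split; intros i; destruct i; reflexivity].
    intros i j l. destruct i, j, l; unfold pd, sum2, om, Gf; cbv beta iota; cbn [fst snd];
      match goal with
      | |- is_derive (fun z => ?a) _ _ => let t := type of a in eapply dC_eq; [apply dC_const | ring]
      | |- is_derive (fun z => - / (_ + z * _ - _)) _ _ => eapply dC_eq; [apply dC_opp; apply dw1; auto | ring]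
      | |- is_derive (fun z => - / (_ + _ * z - _)) _ _ => eapply dC_eq; [apply dC_opp; apply dw2; auto | ring]
      | |- is_derive (fun z => / (_ + z * _ - _)) _ _ => eapply dC_eq; [apply dw1; auto | ring]
      | |- is_derive (fun z => / (_ + _ * z - _)) _ _ => eapply dC_eq; [apply dw2; auto | ring]
      end.
Qed.

Lemma chart_ok (a1 a2 a3 a4 c s0 : C) : c <> 0 -> s0 * s0 = c ->
  chart a1 a2 a3 a4 (Uf a1 a2 a3 a4 c) (hf a1 a2 a3 a4 c s0).
Proof.
  intros Hc Hs. split; [|split].
  - unfold Uf. apply (@open_comp CC CA (Phi a1 a2 a3 a4 c) (fun w => (0 < Re w)%R)).
    + intros q _. unfold Phi, Dl, Cdiv.
      match goal with |- filterlim ?f (locally ?q) _ => change (@continuous CC CA f q) end. ctac.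
    + exact open_re.
  - intros [q1 q2] Hu i. destruct i; eexists; cbn [pd fst snd]; unfold hf; cbn [fst snd];
      repeat (first [ match goal with
                      | |- is_derive (fun z => Sf _ _ _ _ _ _ (z, _)) _ _ => apply dS1; auto
                      | |- is_derive (fun z => Sf _ _ _ _ _ _ (_, z)) _ _ => apply dS2; auto
                      end | dstepF ]);
      cbv beta; apply C_nz; lra.
  - intros q Hu. destruct (Uf_facts a1 a2 a3 a4 c s0 q Hc Hs Hu) as [HD [_ [_ [_ [HSS HS0]]]]].
    split.
    + transitivity ((Sf a1 a2 a3 a4 c s0 q * Sf a1 a2 a3 a4 c s0 q - Dl a1 a2 a3 a4 (fst q) (snd q)) / 4).
      * unfold Fa, hf, Dl. field. 
      * rewrite HSS. field.
    + rewrite hf_D. exact HS0.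
Qed.

Lemma nonflat (a1 a2 a3 a4 b1 b2 s0 : C) : Qp a1 a2 a3 a4 b1 b2 <> 0 -> Dl a1 a2 a3 a4 b1 b2 <> 0 ->
  s0 * s0 = Dl a1 a2 a3 a4 b1 b2 -> ~ flat (Uf a1 a2 a3 a4 (Dl a1 a2 a3 a4 b1 b2)) (Gf a1 a2 a3 a4).
Proof.
  intros HQ HD Hs Hfl.
  assert (Hu : Uf a1 a2 a3 a4 (Dl a1 a2 a3 a4 b1 b2) (b1, b2)).
  { unfold Uf, Phi. cbn [fst snd].
    replace (Dl a1 a2 a3 a4 b1 b2 / Dl a1 a2 a3 a4 b1 b2) with (RtoC 1) by (field; auto).
    simpl. lra. }
  destruct (Hfl (b1, b2) Hu) as [dG [Hd Hid]].
  specialize (Hid I1 I1 I1 I2). unfold sum2 in Hid; cbn [Gf] in Hid.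
  assert (E1 : dG I1 I1 I2 I1 = 0).
  { specialize (Hd I1 I1 I2 I1). cbn [pd Gf fst snd] in Hd. exact (dC_unique _ _ _ _ Hd (dC_const _ _)). }
  assert (Hv : is_derive (fun z => - Dl1 a1 a2 a3 a4 b1 z / (2 * Dl a1 a2 a3 a4 b1 z)) b2
     (- Qp a1 a2 a3 a4 b1 b2 / (2 * Dl a1 a2 a3 a4 b1 b2 * Dl a1 a2 a3 a4 b1 b2))).
  { eapply dC_eq; [dtacF; cbv beta; apply Cmult_neq_0; [apply C_nz; lra | exact HD] |].
    cbv beta. unfold Qp. field. repeat split; auto; try (apply C_nz; lra). }
  assert (E2 := Hd I2 I1 I1 I1). cbn [pd Gf fst snd] in E2. unfold Af in E2. cbn [fst snd] in E2.
  rewrite E1, (dC_unique _ _ _ _ E2 Hv) in Hid.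
  assert (Ev : - (- Qp a1 a2 a3 a4 b1 b2 / (2 * Dl a1 a2 a3 a4 b1 b2 * Dl a1 a2 a3 a4 b1 b2)) = 0).
  { rewrite <- Hid. ring. }
  apply HQ.
  replace (Qp a1 a2 a3 a4 b1 b2) with ((2 * Dl a1 a2 a3 a4 b1 b2 * Dl a1 a2 a3 a4 b1 b2) *
     (- (- Qp a1 a2 a3 a4 b1 b2 / (2 * Dl a1 a2 a3 a4 b1 b2 * Dl a1 a2 a3 a4 b1 b2)))).
  - rewrite Ev. ring.
  - field. repeat split; auto; try (apply C_nz; lra).
Qed.

Theorem theorem1p2 (a1 a2 a3 a4 : C) :
  (forall (U : C * C -> Prop) (h : C * C -> C), chart a1 a2 a3 a4 U h ->
     forall G : christoffel, is_hess a3 U h G -> flat U G)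
  <-> (a1 = 0 /\ a2 = 0 /\ a3 = 0 /\ a4 = 4).
Proof.
  split.
  - intros H. apply NNPP. intros Hn.
    destruct (pt_exists a1 a2 a3 a4 Hn) as [b1 [b2 [HQ HD]]].
    destruct (csqrt_ex (Dl a1 a2 a3 a4 b1 b2)) as [s0 Hs].
    apply (nonflat a1 a2 a3 a4 b1 b2 s0 HQ HD Hs).
    apply (H _ (hf a1 a2 a3 a4 (Dl a1 a2 a3 a4 b1 b2) s0)); [apply chart_ok | apply hess_ok]; auto.
  - intros [-> [-> [-> ->]]]. intros U h Hch G HG. exact (back U h G Hch HG).
Qed.
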